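(* Let $B_n$ be the number of bidirectional ballot sequences of length $n$. Then $B_n=O(2^n/n)$.
   Context: A 0-1 sequence of length $n$ is a bidirectional ballot sequence if every nonempty prefix and every nonempty suffix of it contains strictly more 1's than 0's. *)

(* Defs.v *)
From mathcomp Require Import all_boot.
Set Implicit Arguments. Unset Strict Implicit. Unset Printing Implicit Defensive.

(* 1 = true, 0 = false *)
Definition more_ones (s : seq bool) : bool := count id s > count negb s.

Definition bidir_ballot (s : seq bool) : bool :=
  [forall k : 'I_(size s).+1,
     (0 < k) ==> more_ones (take k s) && more_ones (drop (size s - k) s)].

Definition B (n : nat) : nat := #|[set t : n.-tuple bool | bidir_ballot t]|.

(* Main.v *)
Require Import Defs.
From mathcomp Require Import all_boot zify.


Definition ind (b : bool) : nat := b.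
Definition G (m j : nat) : nat :=
  \sum_(x < m.+1) ind (m <= 2*x + j) * ind (2*x <= m + j.+1) * 'C(m, x).

Lemma ind_id m j x :
  ind (m.+1 <= 2*x.+1 + j) * ind (2*x.+1 <= m.+1 + j.+1) +
  ind (m.+1 <= 2*x + j) * ind (2*x <= m.+1 + j.+1) =
  ind (m <= 2*x + j.+1) * ind (2*x <= m + j.+2) +
  (if 0 < j then ind (m <= 2*x + j.-1) * ind (2*x <= m + j.-1.+1) else 0).
Proof.
rewrite /ind; case: j => [|j] /=;
repeat match goal with |- context [?a <= ?b] => case: (leqP a b) => ? end; lia.
Qed.

Lemma sum_shift (f : nat -> nat) m : f 0 + \sum_(i < m) f i.+1 = \sum_(i < m.+1) f i.
Proof. by rewrite big_ord_recl. Qed.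

Lemma sum_ext (f : nat -> nat) m : f m.+1 = 0 -> \sum_(i < m.+2) f i = \sum_(i < m.+1) f i.
Proof. by move=> h; rewrite big_ord_recr /= h addn0. Qed.

Lemma G_rec m j : G m.+1 j = G m j.+1 + (if 0 < j then G m j.-1 else 0).
Proof.
pose I x := ind (m.+1 <= 2*x + j) * ind (2*x <= m.+1 + j.+1).
have -> : G m.+1 j = \sum_(x < m.+1) (I x.+1 + I x) * 'C(m, x).
  rewrite /G -(sum_shift (fun x => I x * 'C(m.+1, x))).
  have -> : \sum_(i < m.+1) ind (m.+1 <= 2 * i.+1 + j) * ind (2 * i.+1 <= m.+1 + j.+1) * 'C(m.+1, i.+1)
     = \sum_(i < m.+1) I i.+1 * 'C(m, i) + \sum_(i < m.+1) I i.+1 * 'C(m, i.+1).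
    by rewrite -big_split; apply: eq_bigr => i _; rewrite binS mulnDr addnC.
  rewrite addnCA.
  have -> : I 0 * 'C(m.+1, 0) + \sum_(i < m.+1) I i.+1 * 'C(m, i.+1)
      = \sum_(i < m.+1) I i * 'C(m, i).
    rewrite !bin0 -(bin0 m) (sum_shift (fun i => I i * 'C(m, i))).
    by rewrite (sum_ext (fun i => I i * 'C(m, i))) // bin_small // muln0.
  by rewrite /I -big_split; apply: eq_bigr => i _; rewrite mulnDl.
rewrite /I; case: ifP => jp.
  rewrite /G -big_split /=; apply: eq_bigr => i _.
  by rewrite ind_id jp mulnDl.
rewrite addn0; apply: eq_bigr => i _.
by rewrite ind_id jp addn0.
Qed.

Ltac CS := repeat match goal with |- context [?a <= ?b] => case: (leqP a b) => ? end; simpl; lia.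

Lemma G0e k : G (2*k) 0 = 'C(2*k, k).
Proof.
rewrite /G (bigD1 (Ordinal (_ : k < (2*k).+1))) /=; first lia; move=> ?.
rewrite big1 => [|i /eqP ne]; first by rewrite /ind; CS.
have : (i : nat) != k by apply/eqP => h; apply: ne; apply: val_inj.
by rewrite /ind => /eqP ?; CS.
by [].
Qed.

Lemma G0o k : G (2*k).+1 0 = 'C((2*k).+1, k.+1).
Proof.
rewrite /G (bigD1 (Ordinal (_ : k.+1 < (2*k).+2))) /=; first lia; move=> ?.
rewrite big1 => [|i /eqP ne]; first by rewrite /ind; CS.
have : (i : nat) != k.+1 by apply/eqP => h; apply: ne; apply: val_inj.
by rewrite /ind => /eqP ?; CS.
by [].
Qed.

Lemma binD k : 'C((2*k).+2, k.+1) = 2 * 'C((2*k).+1, k.+1).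
Proof.
have h : 'C((2*k).+1, (2*k).+1 - k.+1) = 'C((2*k).+1, k.+1) by apply: bin_sub; lia.
rewrite (_ : (2*k).+1 - k.+1 = k) in h; last lia.
rewrite binS h; lia.
Qed.

Lemma binR k : 'C((2*k).+1, k.+1) * k.+1 = (2*k).+1 * 'C(2*k, k).
Proof. by rewrite mulnC -mul_bin_diag. Qed.

Lemma cb k : 'C(2*k,k)^2 * (2*k).+1 <= 16^k.
Proof.
elim: k => [|k IH]; first by rewrite bin0.
have e1 := binR k.
rewrite (_ : 2 * k.+1 = (2*k).+2); last lia.
rewrite binD.
set D := 'C((2*k).+1, k.+1) in e1 *.
set E := 'C(2*k, k) in e1 IH *.
rewrite -(@leq_pmul2r (k.+1 ^ 2)) // expnS.
have -> : (2 * D) ^ 2 * (2 * k).+3 * k.+1 ^ 2 = 4 * ((D * k.+1) ^2 * (2 * k).+3) by rewrite !expnMn; lia.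
rewrite e1 expnMn.
set X := E ^ 2 in IH *.
apply: (@leq_trans (4 * ((2*k).+1 * (2*k).+3) * (X * (2*k).+1))).
  rewrite eq_leq //. rewrite (expnS _ 1) expn1. lia.
apply: (@leq_trans (16 * k.+1^2 * (X * (2*k).+1))).
  apply: leq_mul => //; lia.
apply: leq_trans (leq_mul (leqnn _) IH) _; by rewrite (expnS 16 k) [leqRHS]mulnAC.
Qed.

Definition c m := G m 0.

Lemma key m : c m ^ 2 * m.+1 <= 4 ^ m.
Proof.
have [k [->|->]] : exists k, m = 2 * k \/ m = (2*k).+1.
  exists m./2; have h := odd_double_half m; rewrite -muln2 in h; case: (odd m) h => /= h; lia.
  by rewrite /c G0e (expnM 4 2 k); exact: cb.
rewrite /c G0o.
have := cb k.+1.
rewrite (_ : 2 * k.+1 = (2*k).+2); last lia.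
rewrite binD expnMn.
rewrite (expnS 16 k) (expnS 4 (2*k)) (expnM 4 2 k) => h.
set D := 'C(_, _) in h *.
rewrite -(@leq_pmul2l 4) // (_ : (4^2)^k = 16^k) // [leqRHS]mulnA (_ : 4*4 = 16) //.
apply: leq_trans h.
by rewrite (_ : 2^2 = 4) // mulnA leq_mul2l leqnSn orbT.
Qed.

Fixpoint ok (h : nat) (s : seq bool) : bool :=
  match s with
  | [::] => true
  | b :: s' => if b then ok h.+1 s' else (1 < h) && ok h.-1 s'
  end.

Lemma ok_pref s h :
  (forall k, 0 < k <= size s -> count negb (take k s) < h + count id (take k s)) -> ok h s.
Proof.
elim: s h => [//|b s IH] h H /=.
case: b H => H.
  apply: IH => k hk; have := H k.+1; rewrite /= addnS addSn; apply; lia.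
have -> /= : 1 < h by have := H 1; rewrite /= take0 /=; move=> /(_ ltac:(lia)); lia.
apply: IH => k hk; have := H k.+1 => /=; rewrite addnC addnS => /(_ _).
move=> H'; have {H'} := H' ltac:(lia). lia.
Qed.

Fixpoint W m h : nat :=
  match m with
  | 0 => 1
  | m'.+1 => W m' h.+1 + (if 1 < h then W m' h.-1 else 0)
  end.

Lemma card_cons m (P : seq bool -> bool) :
  #|[set t : m.+1.-tuple bool | P t]| =
  #|[set t : m.-tuple bool | P (true :: t)]| + #|[set t : m.-tuple bool | P (false :: t)]|.
Proof.
have inj b : injective (fun t : m.-tuple bool => [tuple of b :: t]).
  by move=> t1 t2 /(congr1 (fun u => behead (val u))) /= /val_inj.
have E b : #|[set t : m.+1.-tuple bool | P t & thead t == b]| = #|[set t : m.-tuple bool | P (b::t)]|.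
  rewrite -(card_imset _ (inj b)); apply: eq_card => t.
  case/tupleP: t => c t; rewrite !inE /= theadE.
  apply/andP/imsetP => [[Pt /eqP tb]|[u]].
    by subst c; exists t; rewrite ?inE.
  by rewrite inE => Pu /(congr1 val) [-> /val_inj ->].
rewrite -(cardsID [set t : m.+1.-tuple bool | thead t]) -E -E.
congr (_ + _); apply: eq_card => t; rewrite !inE;
  by case: (thead t); rewrite ?andbT ?andbF.
Qed.

Lemma cardW m h : #|[set t : m.-tuple bool | ok h t]| = W m h.
Proof.
elim: m h => [|m IH] h.
  rewrite (_ : [set t : 0.-tuple bool | ok h t] = setT) ?cardsT ?card_tuple //.
  by apply/setP => t; rewrite !inE tuple0.
rewrite card_cons /= IH; congr (_ + _).
case: ifP => h1.
  by rewrite -IH; apply: eq_card => t; rewrite !inE.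
apply/eqP; rewrite cards_eq0; apply/eqP/setP => t; by rewrite !inE.
Qed.

Lemma W_G m j : W m j.+1 = G m j.
Proof.
elim: m j => [|m IH] j.
  by rewrite /G big_ord1 /ind /=.
rewrite G_rec /= IH; case: j => [|j] /=; rewrite ?IH ?addn0 //.
Qed.

Lemma split_bound n a : a <= n -> B n <= W a 0 * W (n - a) 0.
Proof.
move=> an.
pose f (t : n.-tuple bool) : a.-tuple bool * (n - a).-tuple bool :=
  (insubd (nseq_tuple a false) (take a t), insubd (nseq_tuple (n - a) false) (rev (drop a t))).
have f1 (t : n.-tuple bool) : val (f t).1 = take a t.
  by rewrite /= val_insubd size_takel ?size_tuple ?eqxx.
have f2 (t : n.-tuple bool) : val (f t).2 = rev (drop a t).
  by rewrite /= val_insubd size_rev size_drop size_tuple eqxx.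
have finj : injective f.
  move=> t1 t2 e; apply: val_inj; rewrite /= -(cat_take_drop a t1) -(cat_take_drop a t2).
  by rewrite -f1 -(f1 t2) e; congr (_ ++ _); apply: (can_inj revK); rewrite -f2 -(f2 t2) e.
rewrite /B -(card_imset _ finj) -!cardW -cardsX.
apply: subset_leq_card; apply/subsetP => x /imsetP [t]; rewrite inE => bt -> {x}.
have bt' := forallP bt.
have st := size_tuple t.
rewrite in_setX !inE /=; apply/andP; split; apply: ok_pref => k.
  rewrite f1 size_takel ?st // => /andP [k0 ka]; rewrite take_takel //.
  have kk : k < (size t).+1 by lia.
  by have := bt' (Ordinal kk); rewrite /= /more_ones k0 /= => /andP [].
rewrite f2 size_rev size_drop st => /andP [k0 ka].
rewrite take_rev drop_drop size_drop st count_rev (count_rev id).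
have kk : k < (size t).+1 by lia.
have := bt' (Ordinal kk); rewrite /= /more_ones st k0 /= => /andP [] _.
by rewrite (_ : n - a - k + a = n - k) //; lia.
Qed.


Lemma Wc m : W m.+1 0 = c m.
Proof. by rewrite /= addn0 W_G. Qed.

Lemma arith n a x y : 1 <= a -> n = a + (n - a) -> a <= n - a <= a.+1 ->
  x ^ 2 * a <= 4 ^ a.-1 -> y ^ 2 * (n - a) <= 4 ^ (n - a).-1 ->
  n * (x * y) <= 5 * 2 ^ n.
Proof.
move=> a1 na /andP [ab ba] hx hy.
set b := n - a in na ab ba hy.
have e4 k : 4 ^ k = 2 ^ (2 * k) by rewrite expnM.
have tx : 4 ^ a.-1 <= 2 ^ n by rewrite e4 leq_pexp2l //; lia.
have ty : 4 ^ b.-1 <= 2 ^ n by rewrite e4 leq_pexp2l //; lia.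
set T := 2 ^ n in tx ty *.
have s2 : 2 * (x * y) <= x ^ 2 + y ^ 2.
  have [H|H] := leqP x y.
    have [d ->] : exists d, y = x + d by exists (y - x); lia.
    rewrite !expnS !expn0; nia.
  have [d ->] : exists d, x = y + d by exists (x - y); lia.
  rewrite !expnS !expn0; nia.
have h1 : n * x ^ 2 <= 3 * T.
  apply: (@leq_trans (3 * (x ^ 2 * a))); first by nia.
  by rewrite leq_mul2l /=; apply: leq_trans hx tx.
have h2 : n * y ^ 2 <= 2 * T.
  apply: (@leq_trans (2 * (y ^ 2 * b))); first by nia.
  by rewrite leq_mul2l /=; apply: leq_trans hy ty.
apply: (@leq_trans (n * (2 * (x * y)))); first by nia.
apply: (@leq_trans (n * (x ^ 2 + y ^ 2))); first by rewrite leq_mul2l s2 orbT.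
rewrite mulnDr; lia.
Qed.

Theorem proposition9 :
  exists (C N : nat), forall n : nat, N <= n -> n * B n <= C * 2 ^ n.
Proof.
exists 5, 2 => n n2.
have h := odd_double_half n; rewrite -muln2 in h.
set a := n./2 in h.
have an : a <= n by lia.
have hb := @split_bound n a an.
apply: leq_trans (leq_mul (leqnn n) hb) _.
have a1 : 1 <= a by case: (odd n) h => /= h; lia.
have b1 : 1 <= n - a by lia.
have hx := key a.-1; rewrite -Wc (prednK a1) in hx.
have hy := key (n - a).-1; rewrite -Wc (prednK b1) in hy.
apply: (@arith n a) => //; first lia.
apply/andP; split; case: (odd n) h => /= h; lia.
Qed.
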